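(* Let $T>0$, $p>1$, $E_3\ge0$, $\gamma\in(0,pT)$, and $\epsilon\in(0,1)$. Let $\varphi,\varphi_\epsilon\in L^2(\mathbb{R})$ with $\|\varphi-\varphi_\epsilon\|\le\epsilon$, and let $u$ be the exact solution of the backward heat problem with final value $\varphi$, satisfying $$\int_{-\infty}^{\infty}e^{2\gamma\xi^2}|\hat u(\xi,0)|^2\,d\xi\le E_3^2.$$ Choose $\beta=\epsilon$, let $v_\epsilon=R_\beta\varphi_\epsilon$, and set $h=\min\{\gamma,(p-1)T\}$. Then for every $t\in[0,T]$, $$\|u(\cdot,t)-v_\epsilon(\cdot,t)\|\le \epsilon^{\frac{t+h}{pT}}(E_3+1).$$ In particular, $\|u(\cdot,0)-v_\epsilon(\cdot,0)\|\le \epsilon^{\frac{h}{pT}}(E_3+1)$.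
   Context: $\|\cdot\|$ denotes the norm of $L^2(\mathbb{R})$. The Fourier transform is $\hat\psi(\xi)=\frac{1}{\sqrt{2\pi}}\int_{-\infty}^{\infty}\psi(x)e^{-i\xi x}\,dx$ (extended to $L^2(\mathbb{R})$ as a unitary map). Exact solution: for $\varphi\in L^2(\mathbb{R})$, the exact solution $u$ of $u_t-u_{xx}=0$ on $\mathbb{R}\times(0,T)$, $u(\cdot,T)=\varphi$, is given by $\hat u(\xi,t)=e^{(T-t)\xi^2}\hat\varphi(\xi)$ for $t\in[0,T]$. Regularized solution: for $\beta>0$ and $\psi\in L^2(\mathbb{R})$, $R_\beta\psi$ is the function whose Fourier transform in $x$ is $\widehat{(R_\beta\psi)}(\xi,t)=\frac{e^{-t\xi^2}}{\beta e^{(p-1)T\xi^2}+e^{-T\xi^2}}\hat\psi(\xi)=\frac{e^{(T-t)\xi^2}}{1+\beta e^{pT\xi^2}}\hat\psi(\xi)$, $t\in[0,T]$. *)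

(* Defs.v *)
From HB Require Import structures.
From mathcomp Require Import all_boot all_order all_algebra.
From mathcomp Require Import all_classical all_reals all_analysis.
From mathcomp Require Import complex.

Set Implicit Arguments.
Unset Strict Implicit.
Unset Printing Implicit Defensive.

Import Order.TTheory GRing.Theory Num.Theory.
Import numFieldNormedType.Exports.
Local Open Scope classical_set_scope.
Local Open Scope ring_scope.
Local Open Scope complex_scope.

Section L2.
Variable R : realType.

Definition creal (z : R[i]) : R := @complex.Re R z.
Definition cimag (z : R[i]) : R := @complex.Im R z.

Definition cmod2 (z : R[i]) : R := (creal z) ^+ 2 + (cimag z) ^+ 2.

Definition L2fun (f : R -> R[i]) : Prop :=
  [/\ measurable_fun setT (creal \o f), measurable_fun setT (cimag \o f)
    & (\int[@lebesgue_measure R]_x (cmod2 (f x))%:E < +oo)%E].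

Definition L1fun (f : R -> R[i]) : Prop :=
  (@lebesgue_measure R).-integrable setT (EFin \o (creal \o f)) /\
  (@lebesgue_measure R).-integrable setT (EFin \o (cimag \o f)).

Definition L2norm (f : R -> R[i]) : R :=
  Num.sqrt (fine (\int[@lebesgue_measure R]_x (cmod2 (f x))%:E)).

(* the Fourier integral  1/sqrt(2 pi) \int f(x) e^{-i xi x} dx  (for f in L^1),
   written through real and imaginary parts:
   f e^{-i xi x} = (Re f cos + Im f sin) + i (Im f cos - Re f sin). *)
Definition fourier_integral (f : R -> R[i]) (xi : R) : R[i] :=
  ((Num.sqrt (2 * pi))^-1)%:C *
  Complex
    (Rintegral (@lebesgue_measure R) setT
       (fun x => creal (f x) * cos (xi * x) + cimag (f x) * sin (xi * x)))
    (Rintegral (@lebesgue_measure R) setT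
       (fun x => cimag (f x) * cos (xi * x) - creal (f x) * sin (xi * x))).

Definition aeeqL (f g : R -> R[i]) : Prop :=
  {ae @lebesgue_measure R, forall x, f x = g x}.

(* F is the Fourier transform on L^2(R): the unitary map on L^2(R)
   extending the Fourier integral from L^1 \cap L^2. Such a map exists
   (Plancherel) and is unique up to a.e. equality. *)
Definition is_L2_fourier (F : (R -> R[i]) -> (R -> R[i])) : Prop :=
  [/\ (forall f, L2fun f -> L2fun (F f)),
      (forall f g (a b : R[i]), L2fun f -> L2fun g ->
         aeeqL (F (fun x => a * f x + b * g x))
               (fun xi => a * F f xi + b * F g xi)),
      (forall f, L2fun f -> L2norm (F f) = L2norm f),
      (forall f, L2fun f -> L1fun f -> aeeqL (F f) (fourier_integral f))
    & (forall g, L2fun g -> exists2 f, L2fun f & aeeqL (F f) g)].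

End L2.

(* Main.v *)
Require Import Defs.
From HB Require Import structures.
From mathcomp Require Import all_boot all_order all_algebra.
From mathcomp Require Import all_classical all_reals all_analysis.
From mathcomp Require Import complex.
From mathcomp Require Import ring lra measurable_realfun.
Import Order.TTheory GRing.Theory Num.Theory.
Import numFieldNormedType.Exports.
Local Open Scope classical_set_scope.
Local Open Scope ring_scope.
Local Open Scope complex_scope.
Section Helpers.
Variable R : realType.
Lemma expR_le_1pexp (th z : R) : 0 <= th <= 1 -> expR (th * z) <= 1 + expR z.
Proof.
move=> /andP[h0 h1].
have e0 := expR_ge0 z.
case: (leP z 0) => hz.
- have : th * z <= 0 by nra.
  rewrite -ler_expR expR0 => h; lra.
- have : th * z <= z by nra.
  rewrite -ler_expR => h; lra.
Qed.

Lemma key_exp (l c q m x : R) : l < 0 -> 0 <= c <= 1 -> 0 < q ->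
  m <= q * (1 - c) -> 0 <= x ->
  expR (l + m * x) <= expR (c * l) * (1 + expR (l + q * x)).
Proof.
move=> hl /andP[c0 c1] hq hm hx.
have ez := expR_gt0 (l + q * x).
have ec := expR_gt0 (c * l).
case: (leP m 0) => hm0.
- apply: (@le_trans _ _ (expR (c * l))).
    rewrite ler_expR; nra.
  rewrite -{1}(mulr1 (expR (c * l))) ler_pM2l //; lra.
- set th := m / q.
  have hth : m = th * q by rewrite /th mulrVK // unitfE gt_eqF.
  have th0 : 0 <= th by rewrite /th divr_ge0 // ltW.
  have th1 : th <= 1 - c.
    by rewrite /th ler_pdivrMr // mulrC.
  have -> : l + m * x = (1 - th) * l + th * (l + q * x).
    rewrite hth; ring.
  rewrite (expRD ((1 - th) * l)); apply: ler_pM; rewrite ?expR_ge0 //.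
    rewrite ler_expR; nra.
  apply: expR_le_1pexp; apply/andP; split => //; lra.
Qed.

Local Notation mu := (@lebesgue_measure R).

Lemma creal_sub (a b : R[i]) : creal (a - b) = creal a - creal b.
Proof. by case: a; case: b. Qed.
Lemma cimag_sub (a b : R[i]) : cimag (a - b) = cimag a - cimag b.
Proof. by case: a; case: b. Qed.
Lemma cmod2_sub_le (a b : R[i]) : cmod2 (a - b) <= 2 * cmod2 a + 2 * cmod2 b.
Proof.
case: a => a1 a2; case: b => b1 b2; rewrite /cmod2 /creal /cimag /=. have := sqr_ge0 (a1+b1); have := sqr_ge0 (a2+b2). nra.
Qed.
Lemma cmod2_ge0 (z : R[i]) : 0 <= cmod2 z.
Proof. rewrite /cmod2; apply: addr_ge0; apply: sqr_ge0. Qed.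

Lemma meas_cmod2 (f : R -> R[i]) :
  measurable_fun setT (@creal R \o f) -> measurable_fun setT (@cimag R \o f) ->
  measurable_fun setT (fun x => cmod2 (f x)).
Proof.
move=> h1 h2; rewrite /cmod2.
exact: (measurable_funD (measurable_funX 2 h1) (measurable_funX 2 h2)).
Qed.

Lemma meas_Ecmod2 (f : R -> R[i]) :
  measurable_fun setT (@creal R \o f) -> measurable_fun setT (@cimag R \o f) ->
  measurable_fun setT (fun x => (cmod2 (f x))%:E).
Proof. by move=> h1 h2; apply/measurable_EFinP; apply: meas_cmod2. Qed.

Lemma meas_expq (c : R) : measurable_fun setT (fun x : R => expR (c * x ^+ 2)).
Proof.
apply: (measurableT_comp (@measurable_expR R)).
apply: measurable_funM; first exact: measurable_cst.
by apply: measurable_funX; exact: measurable_id.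
Qed.

Lemma L2_int (f : R -> R[i]) : L2fun f ->
  (\int[mu]_x (cmod2 (f x))%:E = ((L2norm f) ^+ 2)%:E)%E.
Proof.
case=> _ _ hf; rewrite /L2norm sqr_sqrtr; last first.
  by rewrite fine_ge0 // integral_ge0 // => x _; rewrite lee_fin cmod2_ge0.
rewrite fineK // ge0_fin_numE //.
by rewrite integral_ge0 // => x _; rewrite lee_fin cmod2_ge0.
Qed.

Lemma int_scale (k : R) (f : R -> R) : 0 <= k -> measurable_fun setT f ->
  (forall x, 0 <= f x) ->
  (\int[mu]_x (k * f x)%:E = k%:E * \int[mu]_x (f x)%:E)%E.
Proof.
move=> hk mf f0.
under eq_integral do rewrite EFinM.
by rewrite ge0_integralZl //; try apply/measurable_EFinP; try (move=> x _; rewrite lee_fin); rewrite ?lee_fin.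
Qed.

Lemma L2fun_sub (f g : R -> R[i]) : L2fun f -> L2fun g -> L2fun (fun x => f x - g x).
Proof.
move=> Hf Hg; case: (Hf) => f1 f2 f3; case: (Hg) => g1 g2 g3.
have e1 : @creal R \o (fun x => f x - g x) = (@creal R \o f) \- (@creal R \o g).
  by apply: funext => x /=; rewrite creal_sub.
have e2 : @cimag R \o (fun x => f x - g x) = (@cimag R \o f) \- (@cimag R \o g).
  by apply: funext => x /=; rewrite cimag_sub.
split.
- by rewrite e1; apply: measurable_funB.
- by rewrite e2; apply: measurable_funB.
apply: (@le_lt_trans _ _ (\int[mu]_x ((2 * cmod2 (f x))%:E + (2 * cmod2 (g x))%:E))%E).
  apply: ge0_le_integral => //.
  - by move=> x _; rewrite lee_fin cmod2_ge0.
  - by apply: meas_Ecmod2; [rewrite e1; apply: measurable_funB|rewrite e2; apply: measurable_funB].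
  - apply: emeasurable_funD; apply/measurable_EFinP; apply: measurable_funM;
      (try exact: measurable_cst); exact: meas_cmod2.
  - by move=> x _; rewrite lee_fin; apply: cmod2_sub_le.
rewrite ge0_integralD //; first last.
- by apply/measurable_EFinP; apply: measurable_funM; [exact: measurable_cst|exact: meas_cmod2].
- by move=> x _; rewrite lee_fin mulr_ge0 // cmod2_ge0.
- by apply/measurable_EFinP; apply: measurable_funM; [exact: measurable_cst|exact: meas_cmod2].
- by move=> x _; rewrite lee_fin mulr_ge0 // cmod2_ge0.
rewrite !int_scale //; try exact: meas_cmod2.
rewrite lte_add_pinfty // lte_mul_pinfty //.
all: by move=> x; apply: cmod2_ge0.
Qed.
Lemma cmod2_scale (k : R) (z : R[i]) : cmod2 (k%:C * z) = k ^+ 2 * cmod2 z.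
Proof. case: z => a b; rewrite /cmod2 /creal /cimag /=. ring. Qed.
Lemma cplx_ext (z w : R[i]) : creal z = creal w -> cimag z = cimag w -> z = w.
Proof. by case: z => a b; case: w => c d /= -> ->. Qed.
Lemma cplx_id (e k1 k2 eT : R) (Fp Fpe : R[i]) : e = k1 + k2 * eT ->
  1 * (e%:C * Fp) + (-1) * (k1%:C * Fpe) =
  k1%:C * (1 * Fp + (-1) * Fpe) + k2%:C * (eT%:C * Fp).
Proof.
move=> ->; case: Fp => a1 a2; case: Fpe => b1 b2.
apply: cplx_ext; rewrite /creal /cimag /=; ring.
Qed.
Lemma sq_add_le (a b s : R) : 0 < s ->
  (a + b) ^+ 2 <= (1 + s) * a ^+ 2 + (1 + s^-1) * b ^+ 2.
Proof.
move=> hs.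
have hs' : s * s^-1 = 1 by rewrite divff // gt_eqF.
have hi : 0 <= s^-1 by rewrite invr_ge0 ltW.
have h : 0 <= s^-1 * (s * a - b) ^+ 2 by rewrite mulr_ge0 // sqr_ge0.
rewrite -subr_ge0.
have -> : (1 + s) * a ^+ 2 + (1 + s^-1) * b ^+ 2 - (a + b) ^+ 2 =
   s^-1 * (s * a - b) ^+ 2.
  have e : s^-1 * (s * a - b) ^+ 2 = (s * s^-1) * (s * a ^+ 2) - 2 * (s * s^-1) * a * b + s^-1 * b ^+ 2 by ring.
  rewrite e hs'; ring.
exact: h.
Qed.
Lemma cmod2_add_le (s : R) (a b : R[i]) : 0 < s ->
  cmod2 (a + b) <= (1 + s) * cmod2 a + (1 + s^-1) * cmod2 b.
Proof.
case: a => a1 a2; case: b => b1 b2 hs; rewrite /cmod2 /creal /cimag /=.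
have := @sq_add_le a1 b1 s hs; have := @sq_add_le a2 b2 s hs; rewrite (mulrDr (1+s)) (mulrDr (1+s^-1)); lra.
Qed.

Lemma sq_le (k K : R) : 0 <= k -> k <= K -> k ^+ 2 <= K ^+ 2.
Proof. move=> h0 h1; rewrite !expr2; nra. Qed.

Lemma pointwise (eps X s e a b eT g : R) (FD FG Fut Fvt FU0 Fp Fpe : R[i]) :
  0 < eps -> 0 < s -> 0 <= e -> 0 <= a -> 0 <= b -> 0 <= eT -> 0 <= g ->
  b * eT = e * a ->
  eps * e <= X * (1 + eps * a) ->
  eps * b <= X * g * (1 + eps * a) ->
  FD = 1 * Fut + (-1) * Fvt -> FG = 1 * Fp + (-1) * Fpe ->
  Fut = e%:C * Fp -> Fvt = (e / (1 + eps * a))%:C * Fpe -> FU0 = eT%:C * Fp ->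
  cmod2 FD <= (1 + s) * (X / eps) ^+ 2 * cmod2 FG
              + (1 + s^-1) * X ^+ 2 * (g ^+ 2 * cmod2 FU0).
Proof.
move=> he0 hs e0 a0 b0 eT0 g0 hbe hb1 hb2 ED EG Eut Evt EU0.
have q0 : 0 < 1 + eps * a by have := mulr_ge0 (ltW he0) a0; lra.
have qn : 1 + eps * a != 0 by rewrite gt_eqF.
set q := 1 + eps * a in q0 qn hb1 hb2 Evt *.
set k1 := e / q in Evt *.
set k2 := eps * b / q.
have hid : e = k1 + k2 * eT.
  rewrite /k1 /k2 (_ : eps * b / q * eT = eps * (e * a) / q); last first.
    by rewrite -hbe; ring.
  rewrite /q; field; exact: qn.
have EFD : FD = k1%:C * FG + k2%:C * FU0.
  by rewrite ED EG Eut Evt EU0; apply: cplx_id.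
have k10 : 0 <= k1 by rewrite /k1 divr_ge0 // ltW.
have k20 : 0 <= k2.
  rewrite /k2 divr_ge0 //; first by rewrite mulr_ge0 // ltW.
  exact: ltW.
have hk1 : k1 <= X / eps.
  have : eps * k1 <= X.
    rewrite -(ler_pM2r q0) /k1 mulrA divfK //.
  move=> h; rewrite -(ler_pM2l he0).
  suff -> : eps * (X / eps) = X by [].
  by rewrite mulrCA divff ?gt_eqF // mulr1.
have hk2 : k2 <= X * g.
  by rewrite -(ler_pM2r q0) /k2 divfK.
rewrite EFD; apply: (le_trans (cmod2_add_le s (k1%:C * FG) (k2%:C * FU0) hs)).
rewrite !cmod2_scale.
have c1 := cmod2_ge0 FG; have c2 := cmod2_ge0 FU0.
apply: lerD.
  rewrite -mulrA ler_pM2l; last lra.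
  by apply: ler_wpM2r => //; apply: sq_le.
have hs' : 0 < 1 + s^-1 by have := invr_gt0 s; rewrite hs; lra.
rewrite -mulrA ler_pM2l // mulrA -exprMn.
by apply: ler_wpM2r => //; apply: sq_le.
Qed.
End Helpers.

Section F.
Variable R : realType.
Lemma final_real (N X E : R) : 0 <= N -> 0 < X -> 0 <= E ->
  (forall s, 0 < s -> N ^+ 2 <= (1 + s) * X ^+ 2 + (1 + s^-1) * X ^+ 2 * E ^+ 2) ->
  N <= X * (E + 1).
Proof.
move=> N0 X0 E0 H.
suff : N ^+ 2 <= (X * (E + 1)) ^+ 2.
  move=> h; have hy : 0 <= X * (E + 1) by rewrite mulr_ge0 // ?ltW //; lra.
  rewrite !expr2 in h; nra.
have X2 : 0 < X ^+ 2 by rewrite exprn_gt0.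
case: (ltP 0 E) => hE.
- have := H E hE.
  suff -> : (1 + E) * X ^+ 2 + (1 + E^-1) * X ^+ 2 * E ^+ 2 = (X * (E + 1)) ^+ 2 by [].
  by field; rewrite gt_eqF.
- have E00 : E = 0 by lra.
  rewrite E00 add0r mulr1.
  rewrite leNgt; apply/negP => hN.
  pose s := (N ^+ 2 - X ^+ 2) / (2 * X ^+ 2).
  have s0 : 0 < s by rewrite /s divr_gt0 //; [lra|lra].
  have := H s s0; rewrite E00 expr0n /= mulr0 addr0.
  have -> : (1 + s) * X ^+ 2 = (X ^+ 2 + N ^+ 2) / 2.
    by rewrite /s; field; rewrite gt_eqF.
  lra.
Qed.

Lemma ae_and (P Q : R -> Prop) :
  {ae @lebesgue_measure R, forall x, P x} -> {ae @lebesgue_measure R, forall x, Q x} ->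
  {ae @lebesgue_measure R, forall x, P x /\ Q x}.
Proof.
move=> hP hQ.
exact: (filterS2 (ae_filter_ringOfSetsType _) (fun x a b => conj a b) hP hQ).
Qed.
End F.

Arguments L2_int {R f}.
Arguments ae_and {R P Q}.

Theorem theorem4 (R : realType) (F : (R -> R[i]) -> (R -> R[i]))
  (T p E3 gamma eps : R) (phi phi_eps : R -> R[i]) (u v : R -> R -> R[i]) :
  is_L2_fourier F ->
  0 < T -> 1 < p -> 0 <= E3 -> 0 < gamma -> gamma < p * T ->
  0 < eps -> eps < 1 ->
  L2fun phi -> L2fun phi_eps ->
  L2norm (fun x => phi x - phi_eps x) <= eps ->
  (forall t, 0 <= t <= T ->
     L2fun (u t) /\
     aeeqL (F (u t)) (fun xi => (expR ((T - t) * xi ^+ 2))%:C * F phi xi)) ->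
  (\int[@lebesgue_measure R]_xi
      (expR (2 * gamma * xi ^+ 2) * cmod2 (F (u 0) xi))%:E <= (E3 ^+ 2)%:E)%E ->
  (forall t, 0 <= t <= T ->
     L2fun (v t) /\
     aeeqL (F (v t))
       (fun xi => (expR ((T - t) * xi ^+ 2)
                   / (1 + eps * expR (p * T * xi ^+ 2)))%:C * F phi_eps xi)) ->
  let h := Num.min gamma ((p - 1) * T) in
  (forall t, 0 <= t <= T ->
     L2norm (fun x => u t x - v t x) <= eps `^ ((t + h) / (p * T)) * (E3 + 1))
  /\ L2norm (fun x => u 0 x - v 0 x) <= eps `^ (h / (p * T)) * (E3 + 1).
Proof.
move=> hF T0 p1 E0 g0 gpT e0 e1 Lphi Lphie hdiff hu hE hv h.
have pT0 : 0 < p * T by rewrite mulr_gt0 //; lra.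
have hh1 : h <= gamma by rewrite /h ge_min lexx.
have hh2 : h <= (p - 1) * T by rewrite /h ge_min lexx orbT.
have hh0 : 0 < h.
  rewrite /h lt_min g0 /=; apply: mulr_gt0; lra.
have epT : (p - 1) * T = p * T - T by ring.
suff key : forall t, 0 <= t <= T ->
    L2norm (fun x => u t x - v t x) <= eps `^ ((t + h) / (p * T)) * (E3 + 1).
  split => //; rewrite -[h in h / _]add0r; apply: key; rewrite lexx ltW //.
move=> t /andP[t0 tT].
case: hF => FL2 Flin Fnorm _ _.
set c := (t + h) / (p * T).
have c0 : 0 <= c by rewrite /c divr_ge0 //; lra.
have c1 : c <= 1 by rewrite /c ler_pdivrMr // mul1r; lra.
have hc : p * T * c = t + h by rewrite /c mulrC divfK // gt_eqF.
set l := ln eps.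
have hl : l < 0 by apply: ln_lt0; rewrite e0 e1.
have el : expR l = eps by rewrite /l lnK // posrE.
set X := expR (c * l).
have X0 : 0 < X by apply: expR_gt0.
have -> : eps `^ c = X by rewrite /powR gt_eqF.
have [Lut Hut] := hu t (introT andP (conj t0 tT)).
have [Lvt Hvt] := hv t (introT andP (conj t0 tT)).
have [Lu0 Hu0] : L2fun (u 0) /\
     aeeqL (F (u 0)) (fun xi => (expR ((T - 0) * xi ^+ 2))%:C * F phi xi).
  by apply: hu; rewrite lexx ltW.
set D := fun x => u t x - v t x.
have LD : L2fun D by apply: L2fun_sub.
set G := fun x => phi x - phi_eps x.
have LG : L2fun G by apply: L2fun_sub.
have HD : aeeqL (F D) (fun xi => 1 * F (u t) xi + (-1) * F (v t) xi).
  have := Flin _ _ 1 (-1) Lut Lvt.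
  suff -> : (fun x => 1 * u t x + (-1) * v t x) = D by [].
  by apply: funext => x; rewrite /D mul1r mulN1r.
have HG : aeeqL (F G) (fun xi => 1 * F phi xi + (-1) * F phi_eps xi).
  have := Flin _ _ 1 (-1) Lphi Lphie.
  suff -> : (fun x => 1 * phi x + (-1) * phi_eps x) = G by [].
  by apply: funext => x; rewrite /G mul1r mulN1r.
rewrite -/D -(Fnorm _ LD).
have LFD := FL2 _ LD; have LFG := FL2 _ LG; have LFu0 := FL2 _ Lu0.
apply: final_real => //; first by apply: sqrtr_ge0.
move=> s s0.
set A := (1 + s) * (X / eps) ^+ 2.
set B := (1 + s^-1) * X ^+ 2.
have A0 : 0 <= A by rewrite /A mulr_ge0 ?sqr_ge0 //; lra.
have s'0 : 0 < s^-1 by rewrite invr_gt0.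
have B0 : 0 <= B by rewrite /B mulr_ge0 ?sqr_ge0 //; lra.
case: (LFD) => mD1 mD2 _; case: (LFG) => mG1 mG2 _; case: (LFu0) => mU1 mU2 _.
have mW : measurable_fun setT (fun x : R => expR (2 * gamma * x ^+ 2) * cmod2 (F (u 0) x)).
  by apply: measurable_funM; [exact: meas_expq|exact: meas_cmod2].
rewrite -lee_fin -(L2_int LFD).
apply: (@le_trans _ _ (\int[@lebesgue_measure R]_x
   ((A * cmod2 (F G x))%:E + (B * (expR (2 * gamma * x ^+ 2) * cmod2 (F (u 0) x)))%:E))%E).
  apply: ae_ge0_le_integral => //.
  - by move=> x _; rewrite lee_fin cmod2_ge0.
  - exact: meas_Ecmod2.
  - by move=> x _; rewrite -EFinD lee_fin addr_ge0 // mulr_ge0 // ?mulr_ge0 // ?cmod2_ge0 // expR_ge0.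
  - apply: emeasurable_funD; apply/measurable_EFinP; apply: measurable_funM => //;
      try exact: measurable_cst; exact: meas_cmod2.
  have Hall := ae_and (ae_and (ae_and (ae_and HD HG) Hut) Hvt) Hu0.
  apply: (@filterS _ _ (ae_filter_ringOfSetsType _) _ _ _ Hall).
  move=> x [[[[E1 E2] E3'] E4] E5] _.
  rewrite -EFinD lee_fin.
  have -> : expR (2 * gamma * x ^+ 2) = (expR (gamma * x ^+ 2)) ^+ 2.
    by rewrite [RHS]expr2 -expRD; congr expR; ring.
  have x2 : 0 <= x ^+ 2 by apply: sqr_ge0.
  apply: (@pointwise R eps X s (expR ((T - t) * x ^+ 2)) (expR (p * T * x ^+ 2))
     (expR ((p * T - t) * x ^+ 2)) (expR ((T - 0) * x ^+ 2)) (expR (gamma * x ^+ 2))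
     _ _ (F (u t) x) (F (v t) x) _ (F phi x) (F phi_eps x)) => //;
     try exact: expR_ge0.
  - by rewrite -!expRD; congr expR; ring.
  - rewrite -{1}el -expRD -el -expRD.
    apply: key_exp => //; first by rewrite c0 c1.
    rewrite mulrBr mulr1 hc; lra.
  - have -> : eps * expR ((p * T - t) * x ^+ 2) =
        expR (l + (p * T - t - gamma) * x ^+ 2) * expR (gamma * x ^+ 2).
      by rewrite -expRD -{1}el -expRD; congr expR; ring.
    rewrite mulrAC; apply: ler_wpM2r; first exact: expR_ge0.
    rewrite -el -expRD.
    apply: key_exp => //; first by rewrite c0 c1.
    rewrite mulrBr mulr1 hc; lra.
rewrite ge0_integralD //; first last.
- by apply/measurable_EFinP; apply: measurable_funM; [exact: measurable_cst|exact: mW].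
- by move=> x _; rewrite lee_fin mulr_ge0 // mulr_ge0 ?expR_ge0 ?cmod2_ge0.
- by apply/measurable_EFinP; apply: measurable_funM; [exact: measurable_cst|exact: meas_cmod2].
- by move=> x _; rewrite lee_fin mulr_ge0 // cmod2_ge0.
rewrite int_scale //; last 2 first.
- exact: meas_cmod2.
- by move=> x; apply: cmod2_ge0.
rewrite int_scale //; last by move=> x; rewrite mulr_ge0 ?expR_ge0 ?cmod2_ge0.
rewrite (L2_int LFG) (Fnorm _ LG) EFinD.
apply: leeD.
  rewrite -EFinM lee_fin.
  have -> : (1 + s) * X ^+ 2 = A * eps ^+ 2.
    rewrite /A; field; rewrite gt_eqF //.
  apply: ler_wpM2l => //; apply: sq_le => //; exact: sqrtr_ge0.
rewrite (EFinM B); apply: lee_pmul => //.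
by apply: integral_ge0 => x _; rewrite lee_fin mulr_ge0 ?expR_ge0 ?cmod2_ge0.
Qed.
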